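(* Let $W\subseteq\mathbb{R}^n$ be a linear subspace of dimension $d<n$. If $A\subseteq\mathbb{R}$ is countable, then the set $\mathcal{A} := \bigl\{(y_1,\dotsc,y_n)\in\mathbb{R}^n:\sum_{i=1}^n\mathbb{1}_{\{y_i - w_i\in A\}}\ge d+1\text{ for some }(w_1,\dotsc,w_n)\in W\bigr\}$ has Lebesgue measure $0$. *)

(* Defs.v *)
From HB Require Import structures.
From mathcomp Require Import all_boot all_order all_algebra.
From mathcomp Require Import all_classical all_reals.
Set Implicit Arguments. Unset Strict Implicit. Unset Printing Implicit Defensive.
Import Order.TTheory GRing.Theory Num.Theory.
Local Open Scope classical_set_scope.
Local Open Scope ring_scope.

Definition box (R : realType) (n : nat) (a b : 'rV[R]_n) : set 'rV[R]_n :=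
  [set x | forall i : 'I_n, a 0 i <= x 0 i <= b 0 i].

Definition box_vol (R : realType) (n : nat) (a b : 'rV[R]_n) : R :=
  \prod_(i < n) (b 0 i - a 0 i).

(* S has n-dimensional Lebesgue measure 0: for every eps > 0, S is covered by
   countably many boxes of total volume at most eps (Lebesgue outer measure 0). *)
Definition lebesgue_null (R : realType) (n : nat) (S : set 'rV[R]_n) : Prop :=
  forall eps : R, 0 < eps ->
    exists a b : nat -> 'rV[R]_n,
      [/\ (forall k (i : 'I_n), a k 0 i <= b k 0 i),
          S `<=` \bigcup_k box (a k) (b k)
        & forall N : nat, \sum_(k < N) box_vol (a k) (b k) <= eps].

Definition bad_set (R : realType) (n d : nat) (W : {vspace 'rV[R]_n})
  (A : set R) : set 'rV[R]_n :=
  [set y : 'rV[R]_n | exists2 w : 'rV[R]_n, w \in W &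
     (d.+1 <= #|[set i : 'I_n | (y ord0 i - w ord0 i)%R \in A]|)%N].

(* Main.v *)
Require Import Defs.
From HB Require Import structures.
From mathcomp Require Import all_boot all_order all_algebra.
From mathcomp Require Import all_classical all_reals.
From mathcomp Require Import ring lra.
Import Order.TTheory GRing.Theory Num.Theory.
Local Open Scope classical_set_scope.
Local Open Scope ring_scope.

Definition fcov (R : realType) (n : nat) (S : set 'rV[R]_n) : Prop :=
  forall eps : R, 0 < eps -> exists s : seq ('rV[R]_n * 'rV[R]_n),
   [/\ (forall x, x \in s -> forall i, x.1 0 i <= x.2 0 i),
       (forall y, S y -> exists2 x, x \in s & box x.1 x.2 y) &
       \sum_(x <- s) box_vol x.1 x.2 <= eps].

Arguments fcov {R n}.

Lemma geom (R : realType) (N : nat) :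
  \sum_(m < N) (2^-1 : R) ^+ m.+1 = 1 - 2^-1 ^+ N.
Proof.
elim: N => [|N IH]; first by rewrite big_ord0 expr0 subrr.
rewrite big_ord_recr /= IH !exprS; set u := _ ^+ N; field; rewrite ?pnatr_eq0 //.
Qed.

Lemma null_union (R : realType) (n : nat) (S : set 'rV[R]_n)
  (T : nat -> set 'rV[R]_n) :
  (0 < n)%N -> (forall m, fcov (T m)) -> (forall y, S y -> exists m, T m y) ->
  lebesgue_null S.
Proof.
move=> n0 HT HS eps e0.
have /choice [s Hs] : forall m : nat, exists s : seq ('rV[R]_n * 'rV[R]_n),
   [/\ (forall x, x \in s -> forall i, x.1 0 i <= x.2 0 i),
       (forall y, T m y -> exists2 x, x \in s & box x.1 x.2 y) &
       \sum_(x <- s) box_vol x.1 x.2 <= eps * 2^-1 ^+ m.+1].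
  move=> m; apply: HT; apply: mulr_gt0 => //; apply: exprn_gt0; rewrite invr_gt0 //.
pose z0 : 'rV[R]_n * 'rV[R]_n := (0, 0).
pose F := fun m => z0 :: s m.
pose L := fun K => flatten (map F (iota 0 K)).
have LD : forall a b, L (a + b)%N = L a ++ flatten (map F (iota a b)).
  by move=> a b; rewrite /L iotaD map_cat flatten_cat.
have Lsz : forall K, (K <= size (L K))%N.
  elim => // K IH; rewrite -addn1 LD size_cat /= cats0 /=.
  by rewrite addn1 addnS ltnS (leq_trans IH) // leq_addr.
have Lval : forall K k i, (nth z0 (L K) k).1 0 i <= (nth z0 (L K) k).2 0 i.
  move=> K k i; case: (ltnP k (size (L K))) => hk; last by rewrite nth_default //= mxE.
  move: (mem_nth z0 hk) => /flatten_mapP [m _]; rewrite inE => /orP [/eqP -> | xs].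
    by rewrite /= mxE.
  by have [H _ _] := Hs m; apply: H.
have vol0 : forall K k, 0 <= box_vol (nth z0 (L K) k).1 (nth z0 (L K) k).2.
  by move=> K k; apply: prodr_ge0 => i _; rewrite subr_ge0.
have Lpre : forall K k, (k < K)%N -> nth z0 (L k.+1) k = nth z0 (L K) k.
  move=> K k kK; rewrite -(subnKC kK) LD nth_cat.
  by rewrite (leq_trans (leqnn k.+1) (Lsz _)).
exists (fun k => (nth z0 (L k.+1) k).1), (fun k => (nth z0 (L k.+1) k).2).
split.
- by move=> k i; apply: Lval.
- move=> y /HS [m Tmy]; have [_ cov _] := Hs m; have [x xs yx] := cov y Tmy.
  pose k := (size (L m) + (index x (s m)).+1)%N.
  exists k => //.
  have km : (m <= k.+1)%N by rewrite ltnW // ltnS (leq_trans (Lsz m)) // leq_addr.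
  have E : nth z0 (L k.+1) k = x.
    rewrite -(subnKC km) LD nth_cat ltnNge leq_addr /= addKn.
    rewrite subSn; last by rewrite (leq_trans (Lsz m)) // leq_addr.
    by rewrite /= nth_cat /= index_mem xs nth_index.
  by rewrite E.
- move=> N.
  rewrite (eq_bigr (fun k : 'I_N => box_vol (nth z0 (L N) k).1 (nth z0 (L N) k).2));
    last by move=> k _; rewrite (Lpre N).
  apply: (@le_trans _ _ (\sum_(x <- L N) box_vol x.1 x.2)).
    rewrite (big_nth z0) (@big_cat_nat _ _ _ N 0 _ _ _ (leq0n N) (Lsz N)) /= big_mkord.
    by rewrite lerDl sumr_ge0 // => k _; apply: vol0.
  rewrite big_flatten big_map /=.
  apply: (@le_trans _ _ (\sum_(m <- iota 0 N) eps * 2^-1 ^+ m.+1)).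
    apply: ler_sum => m _; rewrite big_cons.
    have -> : box_vol z0.1 z0.2 = 0.
      rewrite /box_vol (bigD1 (Ordinal n0)) //= !mxE subrr mul0r //.
    by rewrite add0r; have [_ _ H] := Hs m.
  have -> : iota 0 N = index_iota 0 N by rewrite /index_iota subn0.
  rewrite big_mkord -mulr_sumr geom.
  rewrite ler_piMr // ?lerBlDr ?lerDl ?gt0_cp //. by rewrite exprn_gt0 // invr_gt0.
Qed.

Lemma grid (R : realType) (N : nat) (u : R) : (0 < N)%N -> 0 <= u <= 1 ->
  exists k : 'I_N, (k : nat)%:R / N%:R <= u <= (k : nat)%:R / N%:R + N%:R^-1.
Proof.
move=> N0 /andP [u0 u1].
have Np : 0 < N%:R :> R by rewrite ltr0n.
have := truncn_itv (mulr_ge0 u0 (ltW Np)).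
set k0 := Num.trunc _ => /andP [h1 h2].
case: (ltnP k0 N) => hk.
  exists (Ordinal hk) => /=; apply/andP; split.
    by rewrite ler_pdivrMr.
  have -> : k0%:R / N%:R + N%:R^-1 = (k0.+1)%:R / N%:R :> R by rewrite -natr1 mulrDl mul1r.
  rewrite ler_pdivlMr //; exact: ltW.
have Nm : (N.-1 < N)%N by rewrite prednK.
exists (Ordinal Nm) => /=.
have uN : u = 1.
  apply/eqP; rewrite eq_le u1 /=.
  by rewrite -(ler_pM2r Np) mul1r (le_trans _ h1) // ler_nat.
have -> : N%:R = N.-1%:R + 1 :> R by rewrite natr1 prednK.
rewrite uN; apply/andP; split.
  rewrite ler_pdivrMr ?mul1r ?lerDl //; rewrite ltr_wpDl //.
rewrite -[X in _ <= _ + X]mul1r -mulrDl mulfV // gt_eqF // ltr_wpDl //.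
Qed.

Lemma hyp_fcov (R : realType) (n : nat) (c : 'rV[R]_n) (t : R) (z : 'I_n -> R) :
  c != 0 ->
  fcov [set y : 'rV[R]_n | \sum_i c 0 i * y 0 i = t /\
                           forall i, z i <= y 0 i <= z i + 1].
Proof.
move=> c0.
have [j cj] : exists j, c 0 j != 0.
  apply/existsP; apply: contraNT c0 => /existsPn H; apply/eqP/rowP => i.
  by rewrite mxE; apply/eqP; move: (H i); rewrite negbK.
move=> eps e0.
have acj : 0 < `|c 0 j| by rewrite normr_gt0.
pose L := (1 + \sum_i `|c 0 i|) / `|c 0 j|.
have L0 : 0 < L.
  apply: divr_gt0 => //; have : 0 <= \sum_i `|c 0 i| by apply: sumr_ge0.
  lra.
pose N := (Num.trunc (2 * L / eps)).+1.
have N0 : (0 < N)%N by [].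
have Np : 0 < N%:R :> R by rewrite ltr0n.
pose h : R := N%:R^-1.
pose r := L * h.
pose q (p : {ffun 'I_n -> 'I_N}) i := (p i : nat)%:R * h.
pose m (p : {ffun 'I_n -> 'I_N}) :=
  (t - \sum_(i | i != j) c 0 i * (z i + q p i)) / c 0 j.
pose a (p : {ffun 'I_n -> 'I_N}) : 'rV[R]_n :=
  \row_i (if i == j then m p - r + q p j * (2 * r) else z i + q p i).
pose b (p : {ffun 'I_n -> 'I_N}) : 'rV[R]_n :=
  \row_i (if i == j then m p - r + (q p j + h) * (2 * r) else z i + q p i + h).
exists [seq (a p, b p) | p <- enum {ffun 'I_n -> 'I_N}].
have h0 : 0 < h by rewrite invr_gt0.
have r0 : 0 < r by rewrite mulr_gt0.
split.
- move=> x /mapP [p _ ->] i /=; rewrite !mxE; case: ifP => _; nra.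
- move=> y [Hy Hz].
  have gex : forall i, exists k : 'I_N, i != j ->
      (k:nat)%:R / N%:R <= y 0 i - z i <= (k:nat)%:R / N%:R + N%:R^-1.
    move=> i; case: (i =P j) => [_|ij]; first by exists (Ordinal N0).
    have [|k hk] := @grid R N (y 0 i - z i) N0.
      by have := Hz i; move=> /andP [? ?]; apply/andP; split; lra.
    by exists k.
  have /choice [g Hg] := gex.
  pose p0 := [ffun i => g i].
  have Hb : `|y 0 j - m p0| <= r.
    have e1 : y 0 j = (t - \sum_(i | i != j) c 0 i * y 0 i) / c 0 j.
      by rewrite -Hy (bigD1 j) //= addrK mulrC mulKf.
    have e2 : y 0 j - m p0 =
        (\sum_(i | i != j) c 0 i * (z i + q p0 i - y 0 i)) / c 0 j.
      rewrite e1 /m -mulrBl; congr (_ / _).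
      rewrite [RHS](eq_bigr (fun i => c 0 i * (z i + q p0 i) - c 0 i * y 0 i));
        last by move=> i _; rewrite mulrBr.
      rewrite sumrB; lra.
    rewrite e2 normrM normfV ler_pdivrMr //.
    apply: le_trans (ler_norm_sum _ _ _) _.
    apply: (@le_trans _ _ (\sum_(i | i != j) `|c 0 i| * h)).
      apply: ler_sum => i ij; rewrite normrM ler_wpM2l //.
      have := Hg i ij; rewrite /q /p0 ffunE ler_norml => /andP [? ?].
      apply/andP; split; rewrite /h; lra.
    rewrite -mulr_suml.
    have : \sum_(i | i != j) `|c 0 i| <= \sum_i `|c 0 i|.
      by rewrite [X in _ <= X](bigD1 j) //= lerDr.
    rewrite /r /L mulrAC divfK ?gt_eqF // => HS.
    rewrite ler_wpM2r //; [exact: ltW | lra].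
  have [|kj Hkj] := @grid R N ((y 0 j - (m p0 - r)) / (2 * r)) N0.
    move: Hb; rewrite ler_norml => /andP [? ?].
    apply/andP; split.
      apply: divr_ge0; lra.
    rewrite ler_pdivrMr; lra.
  pose p := [ffun i => if i == j then kj else g i].
  have mp : m p = m p0.
    rewrite /m; congr (_ / _); congr (_ - _); apply: eq_bigr => i ij.
    by rewrite /q !ffunE (negbTE ij).
  exists (a p, b p); first by apply/mapP; exists p; rewrite ?mem_enum.
  move=> i /=; rewrite !mxE mp; case: (eqVneq i j) => [->|ij].
    rewrite /q ffunE eqxx.
    set U := y 0 j - (m p0 - r).
    have EU : y 0 j = m p0 - r + U / (2 * r) * (2 * r).
      rewrite divfK; [rewrite /U; lra | rewrite gt_eqF //; lra].
    rewrite EU; move: Hkj => /andP [H1 H2].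
    apply/andP; split; rewrite lerD2l; rewrite ler_pM2r //; try lra.
  rewrite /q /p ffunE (negbTE ij).
  have := Hg i ij => /andP [H1 H2].
  apply/andP; split; rewrite /h; lra.
- rewrite big_map big_enum /=.
  have E : forall p, box_vol (a p) (b p) =
       \prod_(i < n) (if i == j then h * (2 * r) else h).
    move=> p; apply: eq_bigr => i _; rewrite !mxE; case: ifP => _; ring.
  rewrite (eq_bigr _ (fun p _ => E p)) sumr_const card_ffun !card_ord.
  rewrite (bigD1 j) //= eqxx.
  rewrite (eq_bigr (fun _ => h)) => [|i /negbTE ->] //.
  rewrite prodr_const cardC1 card_ord.
  have nS : n = n.-1.+1 by rewrite prednK // (leq_ltn_trans (leq0n j) (ltn_ord j)).
  rewrite -[_ *+ (N ^ n)%N]mulr_natr natrX [in N%:R ^+ n]nS exprS.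
  have hN : h * N%:R = 1 by rewrite mulVf // gt_eqF.
  have E1 : h ^+ n.-1 * N%:R ^+ n.-1 = 1 by rewrite -exprMn hN expr1n.
  have -> : h * (2 * r) * h ^+ n.-1 * (N%:R * N%:R ^+ n.-1) =
            2 * L * h * (h * N%:R) * (h ^+ n.-1 * N%:R ^+ n.-1) by rewrite /r; ring.
  rewrite hN E1 !mulr1 /h.
  have := truncnS_gt (2 * L / eps); rewrite -/N ltr_pdivrMr // => H.
  rewrite ler_pdivrMr //; apply: ltW; nra.
Qed.

Lemma ortho_vec (R : realType) (n d : nat) (W : {vspace 'rV[R]_n})
  (I : {set 'I_n}) :
  \dim W = d -> (d < #|I|)%N ->
  exists c : 'rV[R]_n, [/\ c != 0, (forall i, i \notin I -> c 0 i = 0) &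
     (forall w, w \in W -> \sum_i c 0 i * w 0 i = 0)].
Proof.
move=> dW dI.
pose G : 'M[R]_(#|I|, \dim W) :=
  \matrix_(k, l) ((vbasis W)`_l) 0 (enum_val k).
have rK : (0 < \rank (kermx G))%N.
  by rewrite mxrank_ker subn_gt0 (leq_ltn_trans (rank_leq_col G)) // dW.
have [k0 vk0] : exists k, row k (kermx G) != 0.
  apply/existsP; apply: contraTT rK => /existsPn H.
  have -> : kermx G = 0.
    apply/row_matrixP => k; rewrite row0; apply/eqP; move: (H k).
    by rewrite negbK.
  by rewrite mxrank0.
set v := row k0 (kermx G).
have vG : v *m G = 0 by apply/sub_kermxP; exact: row_sub.
pose c : 'rV[R]_n := \row_i \sum_k v 0 k * (enum_val k == i)%:R.
have cE : forall k, c 0 (enum_val k) = v 0 k.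
  move=> k; rewrite mxE (bigD1 k) //= eqxx mulr1 big1 ?addr0 // => k' kk'.
  by rewrite (inj_eq enum_val_inj) (negbTE kk') mulr0.
exists c; split.
- apply: contraNneq vk0 => c0; apply/eqP/rowP => k.
  by rewrite -cE c0 !mxE.
- move=> i iI; rewrite mxE big1 // => k _.
  rewrite (_ : (enum_val k == i) = false) ?mulr0 //.
  apply: contraNF iI => /eqP <-; exact: enum_valP.
- move=> w /coord_vbasis wE.
  have -> : \sum_i c 0 i * w 0 i = \sum_k v 0 k * w 0 (enum_val k).
    rewrite (eq_bigr (fun i => \sum_k v 0 k * (enum_val k == i)%:R * w 0 i));
      last by move=> i _; rewrite mxE mulr_suml.
    rewrite exchange_big /=; apply: eq_bigr => k _.
    rewrite (bigD1 (enum_val k)) //= eqxx mulr1 big1 ?addr0 // => i ik.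
    by rewrite eq_sym (negbTE ik) mulr0 mul0r.
  have H0 : \sum_l coord (vbasis W) l w * (v *m G) 0 l = 0.
    by rewrite vG big1 // => l _; rewrite mxE mulr0.
  apply: (etrans _ H0).
  have wk : forall k : 'I_#|I|, w 0 (enum_val k) =
      \sum_l coord (vbasis W) l w * (vbasis W)`_l 0 (enum_val k).
    move=> k; rewrite {1}wE.
    by rewrite summxE; apply: eq_bigr => l _; rewrite mxE.
  under eq_bigr => k _ do rewrite wk mulr_sumr.
  rewrite exchange_big /=; apply: eq_bigr => l _.
  rewrite !mxE mulr_sumr; apply: eq_bigr => k _.
  rewrite !mxE; ring.
Qed.

Lemma count_range (R : realType) (A : set R) :
  countable A -> exists f : nat -> R, A `<=` range f.
Proof.
move=> /countable_injP [g gi].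
have /choice [f Hf] : forall k : nat, exists x : R,
    (exists y, A y /\ g y = k) -> A x /\ g x = k.
  move=> k; case: (pselect (exists y, A y /\ g y = k)) => [[y Hy]|N].
    by exists y.
  by exists 0.
exists f => x Ax; exists (g x) => //.
have [fA fg] := Hf (g x) (ex_intro _ x (conj Ax erefl)).
by apply: gi => //; apply: mem_set.
Qed.

Lemma fcov0 (R : realType) (n : nat) : fcov (set0 : set 'rV[R]_n).
Proof. move=> eps e0; exists [::]; split => //; by rewrite big_nil ltW. Qed.

Theorem lemma6p30 (R : realType) (n d : nat) (W : {vspace 'rV[R]_n})
  (A : set R) :
  \dim W = d -> (d < n)%N -> countable A ->
  lebesgue_null (bad_set d W A).
Proof.
move=> dW dn cA.
have n0 : (0 < n)%N by apply: leq_ltn_trans (leq0n d) dn.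
have [f Af] := @count_range R A cA.
have /choice [cf Hc] : forall I : {set 'I_n}, exists c : 'rV[R]_n,
    (d < #|I|)%N -> [/\ c != 0, (forall i, i \notin I -> c 0 i = 0) &
     (forall w, w \in W -> \sum_i c 0 i * w 0 i = 0)].
  move=> I; case: (ltnP d #|I|) => hI; last by exists 0.
  by have [c Hc] := @ortho_vec R n d W I dW hI; exists c.
pose X := ({set 'I_n} * ({ffun 'I_n -> nat} * {ffun 'I_n -> int}))%type.
pose P (x : X) : set 'rV[R]_n :=
  if (d < #|x.1|)%N then
    [set y | \sum_i cf x.1 0 i * y 0 i = \sum_i cf x.1 0 i * f (x.2.1 i) /\
             forall i, ((x.2.2 i)%:~R : R) <= y 0 i <= (x.2.2 i)%:~R + 1]
  else set0.
pose T (m : nat) := match @unpickle X m with Some x => P x | None => set0 end.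
apply: (@null_union R n _ T n0).
- move=> m; rewrite /T; case: unpickle => [x|]; last exact: fcov0.
  rewrite /P; case: ifP => hI; last exact: fcov0.
  have [c0 _ _] := Hc _ hI.
  exact: (@hyp_fcov R n _ _ (fun i => ((x.2.2 i)%:~R : R)) c0).
- move=> y [w wW hcard].
  set I := [set i | (y ord0 i - w ord0 i) \in A] in hcard.
  have /choice [g Hg] : forall i : 'I_n, exists k,
      (y ord0 i - w ord0 i) \in A -> f k = y ord0 i - w ord0 i.
    move=> i; case: (pselect ((y ord0 i - w ord0 i) \in A)) => [H|H];
      last by exists 0%N.
    by have [k _ fk] := Af _ (set_mem H); exists k.
  pose I' : {set 'I_n} := [set i | (y ord0 i - w ord0 i) \in A]%SET.
  have II : #|I'| = #|I|.
    apply: eq_card => i; rewrite !inE /=.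
    by apply/idP/idP => H; [apply: mem_set | exact: set_mem H].
  pose x : X := (I', ([ffun i => g i], [ffun i => Num.floor (y 0 i)])).
  exists (pickle x); rewrite /T pickleK /P /=.
  have hI : (d < #|I'|)%N by rewrite II.
  rewrite hI.
  have [c0 cI cW] := Hc I' hI.
  split.
  + have E : \sum_i cf I' 0 i * y 0 i =
        \sum_i cf I' 0 i * f ([ffun i => g i] i) + \sum_i cf I' 0 i * w 0 i.
      rewrite -big_split; apply: eq_bigr => i _ /=; rewrite ffunE.
      case: (boolP (i \in I')) => iI.
        rewrite Hg; first ring.
        by move: iI; rewrite inE.
      rewrite cI //; ring.
    by rewrite E cW // addr0.
  + move=> i; rewrite ffunE; apply/andP; split; first exact: floor_le.
    by have := floorD1_gt (y 0 i); rewrite intrD => h; apply: ltW.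
Qed.
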